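(* Let $(M,g,S)$ be as in the context, $p\in M$, and let $u\in T_pM$ be such that $\{u,Su,S^2u,S^3u\}$ is an orthonormal basis of $T_pM$ with respect to $g$. Give each $v\in T_pM$ the coordinates $(x,y,z,t)$ defined by $v=xu+ySu+zS^2u+tS^3u$, and define new coordinates $(x',y',z',t')$ by $x=\frac12(x'-y'+z'-t')$, $y=\frac{\sqrt2}{2}(-y'+t')$, $z=-\frac12(x'+y'+z'+t')$, $t=\frac{\sqrt2}{2}(-x'+z')$. For $a\in\mathbb R$, the hyper-sphere $s=\{v\in T_pM:\tilde g(v,v)=a\}$ has, in the coordinates $(x',y',z',t')$, the equation $$x'^2+y'^2-z'^2-t'^2=\frac{a}{\sqrt2}.$$
   Context: $M$ is a 4-dimensional differentiable manifold with a positive definite metric $g$ and a tensor field $S$ of type $(1,1)$ whose components in some local coordinate system form the matrix with rows $(0,1,0,0)$, $(0,0,1,0)$, $(0,0,0,1)$, $(-1,0,0,0)$; hence $S^4=-\mathrm{id}$. It is assumed that $g(Su,Sv)=g(u,v)$ for all vector fields $u,v$. The associated metric is $\tilde g(u,v)=g(u,Sv)+g(Su,v)$. *)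

(* Defs.v *)
From HB Require Import structures.
From mathcomp Require Import all_boot all_order all_algebra.
From mathcomp Require Import reals.
Set Implicit Arguments. Unset Strict Implicit. Unset Printing Implicit Defensive.
Import Order.TTheory GRing.Theory Num.Theory.
Local Open Scope ring_scope.

(* The tangent space T_pM is modelled as a real vector space V. *)

Definition bilinear_form (R : realType) (V : lmodType R) (g : V -> V -> R) : Prop :=
  (forall (a : R) (u v w : V), g (a *: u + v) w = a * g u w + g v w) /\
  (forall (a : R) (u v w : V), g w (a *: u + v) = a * g w u + g w v).

Definition sym_form (R : realType) (V : lmodType R) (g : V -> V -> R) : Prop :=
  forall u v : V, g u v = g v u.

Definition positive_definite (R : realType) (V : lmodType R) (g : V -> V -> R) : Prop :=
  forall v : V, v != 0 -> 0 < g v v.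

(* S is a (1,1)-tensor at p, i.e. an R-linear endomorphism of V *)
Definition linear_endo (R : realType) (V : lmodType R) (S : V -> V) : Prop :=
  forall (a : R) (u v : V), S (a *: u + v) = a *: S u + S v.

Definition assoc_metric (R : realType) (V : lmodType R) (g : V -> V -> R) (S : V -> V)
  (u v : V) : R := g u (S v) + g (S u) v.

Definition orthonormal_S_basis (R : realType) (V : lmodType R) (g : V -> V -> R)
  (S : V -> V) (u : V) : Prop :=
  (forall i j : 'I_4, g (iter i S u) (iter j S u) = (i == j)%:R) /\
  (forall v : V, exists x y z t : R,
      v = x *: u + y *: S u + z *: S (S u) + t *: S (S (S u))).

(* Main.v *)
Require Import Defs.
From HB Require Import structures.
From mathcomp Require Import all_boot all_order all_algebra.
From mathcomp Require Import reals.
From mathcomp Require Import ring lra.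
Import Order.TTheory GRing.Theory Num.Theory.
Local Open Scope ring_scope.

Theorem theorem3p1 (R : realType) (V : lmodType R) (g : V -> V -> R) (S : V -> V)
  (hg_bil : bilinear_form g) (hg_sym : sym_form g) (hg_pos : positive_definite g)
  (hS_lin : linear_endo S) (hS4 : forall v : V, S (S (S (S v))) = - v)
  (hS_iso : forall u v : V, g (S u) (S v) = g u v)
  (u : V) (hu : orthonormal_S_basis g S u) (a : R) :
  forall (v : V) (x y z t x' y' z' t' : R),
    v = x *: u + y *: S u + z *: S (S u) + t *: S (S (S u)) ->
    x = 2^-1 * (x' - y' + z' - t') ->
    y = Num.sqrt 2 / 2 * (- y' + t') ->
    z = - (2^-1 * (x' + y' + z' + t')) ->
    t = Num.sqrt 2 / 2 * (- x' + z') ->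
    (assoc_metric g S v v = a <->
       x' ^+ 2 + y' ^+ 2 - z' ^+ 2 - t' ^+ 2 = a / Num.sqrt 2).
Proof.
move=> v x y z t x' y' z' t' hv hx hy hz ht.
case: hg_bil => gl gr.
have S0 : S 0 = 0.
  have := hS_lin 1 0 0; rewrite !scale1r addr0 => h.
  by apply/(addrI (S 0)); rewrite addr0 -h.
have SZ : forall (c : R) w, S (c *: w) = c *: S w.
  by move=> c w; have := hS_lin c w 0; rewrite addr0 S0 addr0.
have SD : forall w1 w2, S (w1 + w2) = S w1 + S w2.
  by move=> w1 w2; have := hS_lin 1 w1 w2; rewrite !scale1r.
have gDl : forall w1 w2 w, g (w1 + w2) w = g w1 w + g w2 w.
  by move=> w1 w2 w; have := gl 1 w1 w2 w; rewrite !scale1r mul1r.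
have gDr : forall w1 w2 w, g w (w1 + w2) = g w w1 + g w w2.
  by move=> w1 w2 w; have := gr 1 w1 w2 w; rewrite !scale1r mul1r.
have g0l : forall w, g 0 w = 0.
  move=> w; have := gDl 0 0 w; rewrite addr0 => h.
  by apply/(addrI (g 0 w)); rewrite addr0 -h.
have g0r : forall w, g w 0 = 0.
  move=> w; have := gDr 0 0 w; rewrite addr0 => h.
  by apply/(addrI (g w 0)); rewrite addr0 -h.
have gZl : forall c w1 w, g (c *: w1) w = c * g w1 w.
  by move=> c w1 w; have := gl c w1 0 w; rewrite addr0 g0l addr0.
have gZr : forall c w1 w, g w (c *: w1) = c * g w w1.
  by move=> c w1 w; have := gr c w1 0 w; rewrite addr0 g0r addr0.
case: hu => horth _.
pose e0 := u; pose e1 := S u; pose e2 := S (S u); pose e3 := S (S (S u)).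
have G : forall i j : 'I_4, g (iter i S u) (iter j S u) = (i == j)%:R := horth.
have g00 : g e0 e0 = 1 by exact: (G (@Ordinal 4 0 isT) (@Ordinal 4 0 isT)).
have g01 : g e0 e1 = 0 by exact: (G (@Ordinal 4 0 isT) (@Ordinal 4 1 isT)).
have g02 : g e0 e2 = 0 by exact: (G (@Ordinal 4 0 isT) (@Ordinal 4 2 isT)).
have g03 : g e0 e3 = 0 by exact: (G (@Ordinal 4 0 isT) (@Ordinal 4 3 isT)).
have g10 : g e1 e0 = 0 by exact: (G (@Ordinal 4 1 isT) (@Ordinal 4 0 isT)).
have g11 : g e1 e1 = 1 by exact: (G (@Ordinal 4 1 isT) (@Ordinal 4 1 isT)).
have g12 : g e1 e2 = 0 by exact: (G (@Ordinal 4 1 isT) (@Ordinal 4 2 isT)).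
have g13 : g e1 e3 = 0 by exact: (G (@Ordinal 4 1 isT) (@Ordinal 4 3 isT)).
have g20 : g e2 e0 = 0 by exact: (G (@Ordinal 4 2 isT) (@Ordinal 4 0 isT)).
have g21 : g e2 e1 = 0 by exact: (G (@Ordinal 4 2 isT) (@Ordinal 4 1 isT)).
have g22 : g e2 e2 = 1 by exact: (G (@Ordinal 4 2 isT) (@Ordinal 4 2 isT)).
have g23 : g e2 e3 = 0 by exact: (G (@Ordinal 4 2 isT) (@Ordinal 4 3 isT)).
have g30 : g e3 e0 = 0 by exact: (G (@Ordinal 4 3 isT) (@Ordinal 4 0 isT)).
have g31 : g e3 e1 = 0 by exact: (G (@Ordinal 4 3 isT) (@Ordinal 4 1 isT)).
have g32 : g e3 e2 = 0 by exact: (G (@Ordinal 4 3 isT) (@Ordinal 4 2 isT)).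
have g33 : g e3 e3 = 1 by exact: (G (@Ordinal 4 3 isT) (@Ordinal 4 3 isT)).
have gc : forall a0 a1 a2 a3 b0 b1 b2 b3,
  g (a0 *: e0 + a1 *: e1 + a2 *: e2 + a3 *: e3) (b0 *: e0 + b1 *: e1 + b2 *: e2 + b3 *: e3)
  = a0 * b0 + a1 * b1 + a2 * b2 + a3 * b3.
  move=> *; rewrite !(gDl, gDr, gZl, gZr).
  rewrite g00 g01 g02 g03 g10 g11 g12 g13 g20 g21 g22 g23 g30 g31 g32 g33; ring.
have hSv1 : S v = x *: e1 + y *: e2 + z *: e3 + (- t) *: e0.
  by rewrite hv !(SD, SZ) hS4 scalerN -scaleNr.
have hSv : S v = (- t) *: e0 + x *: e1 + y *: e2 + z *: e3.
  by rewrite hSv1 addrC !addrA.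
have hv' : v = x *: e0 + y *: e1 + z *: e2 + t *: e3 by [].
have E : assoc_metric g S v v = 2 * (x * y + y * z + z * t - t * x).
  by rewrite /assoc_metric hSv hv' !gc; ring.
rewrite E hx hy hz ht.
set r := Num.sqrt (2 : R).
have r0 : 0 < r by rewrite sqrtr_gt0 ltr0n.
have rne : r != 0 by rewrite gt_eqF.
have K : 2 * (2^-1 * (x' - y' + z' - t') * (r / 2 * (- y' + t')) +
   r / 2 * (- y' + t') * - (2^-1 * (x' + y' + z' + t')) +
   - (2^-1 * (x' + y' + z' + t')) * (r / 2 * (- x' + z')) -
   r / 2 * (- x' + z') * (2^-1 * (x' - y' + z' - t')))
   = r * (x' ^+ 2 + y' ^+ 2 - z' ^+ 2 - t' ^+ 2).
  by field; rewrite ?pnatr_eq0 ?rne.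
rewrite K; split.
  by move=> <-; field; rewrite ?pnatr_eq0 ?rne.
by move=> ->; field; rewrite ?pnatr_eq0 ?rne.
Qed.
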